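(* Let $p,q,s$ be idempotents in a unital ring $A$ with $s\perp q$. If $\operatorname{sr}(pAq)=1$, then $\operatorname{sr}(pA(q+s))=1$.
   Context: Idempotents $e,f$ are orthogonal, $e\perp f$, if $ef=fe=0$ (so $q+s$ is an idempotent). For idempotents $p,q$ in a unital ring $A$, $\operatorname{sr}(pAq)=1$ means: whenever $a\in pAq$, $x\in qAp$, $b\in pAp$ satisfy $ax+b=p$, there exist $y\in pAq$, $z\in qAp$ with $(a+by)z=p$. *)

(* Defs.v *)
From mathcomp Require Import all_boot all_algebra.
Set Implicit Arguments. Unset Strict Implicit. Unset Printing Implicit Defensive.
Import GRing.Theory.
Local Open Scope ring_scope.

Definition is_idem (A : pzRingType) (e : A) : Prop := e * e = e.

Definition orth (A : pzRingType) (e f : A) : Prop := e * f = 0 /\ f * e = 0.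

(* membership in the corner p A q : a = p a q (equivalently a = p x q for some x) *)
Definition in_corner (A : pzRingType) (p q a : A) : Prop := a = p * a * q.

Definition sr1 (A : pzRingType) (p q : A) : Prop :=
  forall a x b : A,
    in_corner p q a -> in_corner q p x -> in_corner p p b ->
    a * x + b = p ->
    exists y z : A, in_corner p q y /\ in_corner q p z /\ (a + b * y) * z = p.

(* Main.v *)
Require Import Defs.
From mathcomp Require Import all_boot all_algebra.
Local Open Scope ring_scope.
Import GRing.Theory.

Theorem lemma3 (A : pzRingType) (p q s : A) :
  is_idem p -> is_idem q -> is_idem s -> orth s q ->
  sr1 p q -> sr1 p (q + s).
Proof.
rewrite /is_idem /orth /sr1 /in_corner => hp hq hs [hsq hqs] H a x b ha hx hb hax.
have hr : (q + s) * (q + s) = q + s by rewrite mulrDl !mulrDr hq hs hqs hsq addr0 add0r.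
have pa : p * a = a by rewrite {1}ha !mulrA hp -ha.
have ar : a * (q + s) = a by rewrite {1}ha -!mulrA hr !mulrA -ha.
have xp : x * p = x by rewrite {1}hx -!mulrA hp !mulrA -hx.
have rx : (q + s) * x = x by rewrite {1}hx !mulrA hr -hx.
have qxp : q * x * p = q * x by rewrite -mulrA xp.
have h1 : a * q = p * (a * q) * q by rewrite mulrA pa -mulrA hq.
have h2 : q * x = q * (q * x) * p by rewrite mulrA hq qxp.
have h3 : a * s * x + b = p * (a * s * x + b) * p.
  by rewrite mulrDr mulrDl -hb -!mulrA xp !mulrA pa.
have h4 : a * q * (q * x) + (a * s * x + b) = p.
  rewrite addrA -hax; congr (_ + _).
  by rewrite mulrA -(mulrA a q q) hq -mulrDl -mulrDr ar.
have [y' [z' [hy [hz he]]]] := H _ _ _ h1 h2 h3 h4.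
have qz : q * z' = z' by rewrite hz !mulrA hq.
have zp : z' * p = z' by rewrite hz -mulrA hp.
have yq : y' * q = y' by rewrite hy -mulrA hq.
have ys : y' * s = 0 by rewrite -yq -mulrA hqs mulr0.
exists y', (z' + s * x * y' * z'); split; [|split].
- have py : p * y' = y' by rewrite {1}hy !mulrA hp -hy.
  by rewrite mulrDr py yq ys addr0.
- have sz : s * z' = 0 by rewrite -qz mulrA hsq mul0r.
  have rz : (q + s) * z' = z' by rewrite mulrDl qz sz addr0.
  have rs : (q + s) * s = s by rewrite mulrDl hqs hs add0r.
  by rewrite mulrDr rz !mulrA rs mulrDl zp -!mulrA zp.
- rewrite -he mulrDr !mulrDl.
  have -> : a * z' = a * q * z' by rewrite -mulrA qz.
  have -> : b * y' * (s * x * y' * z') = 0 by rewrite -!mulrA (mulrA y' s) ys !mul0r mulr0.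
  rewrite addr0 -!mulrA.
  by rewrite -!addrA (addrC (b * _)).
Qed.
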